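(* Consider a common-value auction for a single item among several ''slow'' bidders and one ''fast'' bidder, all risk neutral. The value of the item evolves as $v_t = e^{m_t} v_0$ for $t \ge 0$, where $v_0>0$ and $m_t \sim N(-\tfrac{\sigma^2}{2} t, \sigma^2 t)$ (a geometric Brownian motion with $\sigma>0$, so $\mathbb{E}[v_{t+\delta}\mid v_t] = v_t$ for all $t,\delta\ge 0$). The slow bidders submit sealed bids at time $0$. The fast bidder observes the slow bidders' bids and the value process, and submits its bid at time $\Delta>0$. The highest bidder wins, pays its own bid, and receives the realized value $v_\Delta$. Then in equilibrium the slow bidders bid $0$ and the fast bidder wins the item with probability $1$; indeed, any bid $b>0$ by a slow bidder yields strictly negative expected payoff.
   Context: A bidder's payoff is $v_\Delta$ minus its bid if it wins, and $0$ otherwise. *)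

(* Defs.v *)
From HB Require Import structures.
From mathcomp Require Import all_boot all_order all_algebra.
From mathcomp Require Import all_classical all_reals all_analysis.
Set Implicit Arguments. Unset Strict Implicit. Unset Printing Implicit Defensive.
Import Order.TTheory GRing.Theory Num.Theory.
Local Open Scope ring_scope.

Section Auction.
Context {R : realType} {n : nat}.

Definition slow_profile := 'I_n -> R.

(* Highest slow bid (bids are nonnegative, so 0 is a neutral start). *)
Definition max_slow (b : slow_profile) : R := \big[Num.max/0]_(i < n) b i.

(* A strategy of the fast bidder: its bid at time Delta as a function of the
   observed slow bids and of the realized value v_Delta. *)
Definition fast_strategy := slow_profile -> R -> R.

(* Highest bid wins; a tie between the fast bidder and the highest slow bid
   is resolved in favour of the fast bidder. *)
Definition fast_wins (b : slow_profile) (x : R) : bool := max_slow b <= x.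

(* Slow bidder i wins iff the fast bidder loses and i is the highest slow
   bidder (ties among slow bidders broken in favour of the lowest index). *)
Definition slow_wins (b : slow_profile) (x : R) (i : 'I_n) : bool :=
  [&& x < max_slow b, b i == max_slow b &
      [forall j : 'I_n, (j < i)%N ==> (b j < b i)]].

Definition fast_payoff (b : slow_profile) (x v : R) : R :=
  if fast_wins b x then v - x else 0.

Definition slow_payoff (b : slow_profile) (x v : R) (i : 'I_n) : R :=
  if slow_wins b x i then v - b i else 0.

(* The fast bidder best-responds (ex post, after observing everything). *)
Definition fast_best_response (F : fast_strategy) : Prop :=
  forall b : slow_profile, (forall i, 0 <= b i) -> forall v : R, 0 < v ->
    0 <= F b v /\ forall x : R, 0 <= x -> fast_payoff b x v <= fast_payoff b (F b v) v.

(* v_Delta = v0 * exp(m) with m ~ N(-sigma^2 Delta / 2, sigma^2 Delta). *)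
Definition m_mean (sigma Delta : R) : R := - (sigma ^+ 2 * Delta) / 2.
Definition m_sd (sigma Delta : R) : R := sigma * Num.sqrt Delta.
Definition v_Delta (v0 m : R) : R := v0 * expR m.

Definition exp_slow_payoff (v0 sigma Delta : R) (F : fast_strategy)
    (b : slow_profile) (i : 'I_n) : \bar R :=
  (\int[normal_prob (m_mean sigma Delta) (m_sd sigma Delta)]_m
     (slow_payoff b (F b (v_Delta v0 m)) (v_Delta v0 m) i)%:E)%E.

Definition prob_fast_wins (v0 sigma Delta : R) (F : fast_strategy)
    (b : slow_profile) : \bar R :=
  normal_prob (m_mean sigma Delta) (m_sd sigma Delta)
    [set m | fast_wins b (F b (v_Delta v0 m))].

Definition deviate (i : 'I_n) (c : R) : slow_profile :=
  fun j => if j == i then c else 0.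

End Auction.

(* Main.v *)
Require Import Defs.
From HB Require Import structures.
From mathcomp Require Import all_boot all_order all_algebra.
From mathcomp Require Import all_classical all_reals all_analysis.
From mathcomp Require Import ring lra measurable_realfun.
Import Order.TTheory GRing.Theory Num.Theory.
Local Open Scope ring_scope.
Local Open Scope classical_set_scope.

Section S.
Context {R : realType} {n : nat}.

Lemma max_dev (i : 'I_n) (c : R) (c0 : 0 <= c) : max_slow (deviate i c) = c.
Proof.
apply/le_anti/andP; split.
  rewrite /max_slow; apply: (big_ind (fun x => x <= c)) => //.
    by move=> x y hx hy; rewrite ge_max hx hy.
  by move=> j _; rewrite /deviate; case: ifP.
rewrite /max_slow.
have : i \in index_enum 'I_n by rewrite mem_index_enum.
elim: (index_enum 'I_n) => // x r IH; rewrite inE big_cons => /orP[/eqP <-|/IH h].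
  by rewrite le_max /deviate eqxx lexx.
by rewrite le_max h orbT.
Qed.

Lemma payoff_dev (F : @fast_strategy R n) (i : 'I_n) (c v : R) :
  fast_best_response F -> 0 <= c -> 0 < v ->
  slow_payoff (deviate i c) (F (deviate i c) v) v i = Num.min (v - c) 0.
Proof.
move=> HF c0 v0.
have b0 : forall j, 0 <= deviate i c j by move=> j; rewrite /deviate; case: ifP.
have [F0 Hbr] := HF _ b0 v v0.
have hm := max_dev i c c0.
rewrite /slow_payoff /slow_wins hm /deviate eqxx eqxx /=.
have [xc|cx] := ltP (F (deviate i c) v) c.
  have cpos : 0 < c by apply: le_lt_trans xc.
  have -> : [forall j : 'I_n, (j < i)%N ==> ((if j == i then c else 0) < c)].
    apply/forallP => j; apply/implyP => ji.
    by rewrite ifF ?cpos //; apply/negbTE; rewrite neq_ltn ji.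
  have := Hbr c c0; rewrite /fast_payoff /fast_wins hm lexx.
  rewrite (_ : (c <= F (deviate i c) v) = false); last by apply/negbTE; rewrite -ltNge.
  by move=> h; rewrite ?xc /= min_l //; lra.
have : 0 <= v - c.
  rewrite leNgt; apply/negP => vc.
  have cpos : 0 < c by lra.
  have := Hbr 0 (lexx 0); rewrite /fast_payoff /fast_wins hm cx.
  rewrite (_ : (c <= 0) = false); last by apply/negbTE; rewrite -ltNge.
  lra.
by move=> h; rewrite ?(ltNge _ c) ?cx /= min_r //; lra.
Qed.

Lemma max0 : max_slow (fun _ : 'I_n => 0 : R) = 0.
Proof.
by rewrite /max_slow; apply: (big_ind (fun x => x = 0)) => // x y -> ->; rewrite maxxx.
Qed.

Lemma vD_gt0 (v0 m : R) : 0 < v0 -> 0 < v_Delta v0 m.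
Proof. by move=> h; rewrite /v_Delta mulr_gt0 // expR_gt0. Qed.

Lemma payoff_zero (F : @fast_strategy R n) (i : 'I_n) (v : R) :
  fast_best_response F -> 0 < v ->
  slow_payoff (fun _ => 0) (F (fun _ => 0) v) v i = 0.
Proof.
move=> HF v0.
have [F0 _] := HF (fun _ => 0) (fun _ => lexx 0) v v0.
by rewrite /slow_payoff /slow_wins max0 ltNge F0.
Qed.

Lemma meas_g (v0 c : R) (D : set R) :
  measurable_fun D (fun m : R => ((Num.max (c - v_Delta v0 m) 0)%:E : \bar R)).
Proof.
apply/measurable_EFinP.
have -> : (fun m : R => Num.max (c - v_Delta v0 m) 0) =
   (fun m => c - v_Delta v0 m) \max (cst 0) by apply/funext.
apply: measurable_maxr => //.
apply: measurable_funB => //; apply: measurable_funM => //.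
by apply: measurable_funTS; exact: measurable_expR.
Qed.

Lemma normal_pos (mu s a : R) : s != 0 ->
  (0%E < normal_prob mu s `]-oo, a])%E.
Proof.
move=> s0.
rewrite /normal_prob.
set K := (`|a - mu| + 1) ^+ 2.
set d := normal_peak s * expR (- K / (s ^+ 2 *+ 2)).
have d0 : 0 < d by rewrite mulr_gt0 ?expR_gt0 ?normal_peak_gt0.
apply: (@lt_le_trans _ _ (\int[lebesgue_measure]_(x in `[(a - 1)%R, a]) (cst d%:E) x)%E).
  rewrite integral_cst; last exact: measurable_itv.
  have L1 : lebesgue_measure (`[(a - 1)%R, a] : set R) = 1%:E.
    rewrite lebesgue_measure_itv /= lte_fin ltrBlDr ltrDl ltr01 -EFinB opprB.
    by rewrite addrC subrK.
  have h01 : (0 < 1%:E :> \bar R)%E by rewrite lte_fin.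
  apply: mule_gt0; first by rewrite lte_fin.
  exact: (eq_ind _ (fun x => (0 < x)%E) h01 _ (esym L1)).
apply: (@le_trans _ _ (\int[lebesgue_measure]_(x in `[(a - 1)%R, a]) (normal_pdf mu s x)%:E)%E).
  apply: ge0_le_integral => //.
  - by move=> x _; rewrite lee_fin ltW.
  - apply/measurable_EFinP; apply: measurable_funTS; exact: measurable_normal_pdf.
  - move=> x; rewrite /= in_itv /= => /andP[h1 h2].
    rewrite lee_fin normal_pdfE // /d ler_pM2l ?normal_peak_gt0 //.
    rewrite /normal_fun ler_expR !mulNr lerN2 ler_pM2r; last first.
      by rewrite invr_gt0 pmulrn_lgt0 // exprn_even_gt0.
    rewrite /K.
    have t1 : a - mu <= `|a - mu| by apply: ler_norm.
    have t2 : mu - a <= `|a - mu| by rewrite distrC; apply: ler_norm.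
    nra.
apply: ge0_subset_integral => //.
- apply/measurable_EFinP; apply: measurable_funTS; exact: measurable_normal_pdf.
- by move=> x _; rewrite lee_fin normal_pdf_ge0.
- by move=> x; rewrite /= !in_itv /= => /andP[_ ->].
Qed.
End S.

Lemma key_eq (R : realType) (n : nat) (v0 sigma Delta : R) (F : @fast_strategy R n)
  (i : 'I_n) (c : R) : 0 < v0 -> fast_best_response F -> 0 <= c ->
  exp_slow_payoff v0 sigma Delta F (deviate i c) i =
  (- \int[normal_prob (m_mean sigma Delta) (m_sd sigma Delta)]_m
       (Num.max (c - v_Delta v0 m) 0)%:E)%E.
Proof.
move=> v0p HF c0.
rewrite /exp_slow_payoff -integral_ge0N; last by move=> x _; rewrite lee_fin le_max lexx orbT.
apply: eq_integral => m _; rewrite payoff_dev // ?vD_gt0 //.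
have [h|h] := leP (v_Delta v0 m - c) 0.
  by rewrite max_l -?EFinN; [congr EFin; lra | lra].
by rewrite max_r -?EFinN; [congr EFin; lra | lra].
Qed.

Theorem mainTheorem4 (R : realType) (n : nat) (v0 sigma Delta : R)
  (F : @fast_strategy R n) :
  (0 < n)%N -> 0 < v0 -> 0 < sigma -> 0 < Delta ->
  fast_best_response F ->
  (forall b : slow_profile, measurable_fun [set: R] (F b)) ->
  [/\ prob_fast_wins v0 sigma Delta F (fun _ => 0) = 1%E,
      (forall (i : 'I_n) (c : R), 0 <= c ->
         (exp_slow_payoff v0 sigma Delta F (deviate i c) i
          <= exp_slow_payoff v0 sigma Delta F (fun _ => 0%R) i)%E) &
      (forall (i : 'I_n) (c : R), 0 < c ->
         (exp_slow_payoff v0 sigma Delta F (deviate i c) i < 0)%E)].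
Proof.
move=> hn v0p sp Dp HF mF.
have s0 : m_sd sigma Delta != 0 by rewrite /m_sd gt_eqF // mulr_gt0 // sqrtr_gt0.
split.
- rewrite /prob_fast_wins.
  have -> : [set m | fast_wins (fun _ : 'I_n => 0) (F (fun _ => 0) (v_Delta v0 m))] = setT.
    apply/seteqP; split => // m _; rewrite /= /fast_wins max0.
    by have [F0 _] := HF (fun _ => 0) (fun _ => lexx 0) _ (vD_gt0 v0 m v0p).
  exact: probability_setT.
- move=> i c c0.
  have Z : exp_slow_payoff v0 sigma Delta F (fun _ => 0) i = 0%E.
    rewrite /exp_slow_payoff (eq_integral (cst 0%E)) ?integral0 //.
    by move=> m _; rewrite payoff_zero // vD_gt0.
  rewrite Z key_eq //.
  by rewrite oppe_le0 integral_ge0 // => x _; rewrite lee_fin le_max lexx orbT.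
- move=> i c c0; rewrite key_eq ?ltW // oppe_lt0.
  set a := ln (c / (v0 *+ 2)).
  apply: (@lt_le_trans _ _ (\int[normal_prob (m_mean sigma Delta) (m_sd sigma Delta)]_(m in `]-oo, a]) (Num.max (c - v_Delta v0 m) 0)%:E)%E); last first.
    apply: ge0_subset_integral => //; first exact: meas_g.
    by move=> x _; rewrite lee_fin le_max lexx orbT.
  apply: (@lt_le_trans _ _ (\int[normal_prob (m_mean sigma Delta) (m_sd sigma Delta)]_(m in `]-oo, a]) (cst (c / 2)%:E) m)%E); last first.
    apply: ge0_le_integral => //.
    - by move=> x _; rewrite lee_fin; lra.
    - exact: meas_g.
    - move=> x; rewrite /= in_itv /= => xa.
      rewrite lee_fin le_max; apply/orP; left.
      have : v_Delta v0 x <= c / 2.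
        rewrite /v_Delta (_ : c / 2 = v0 * expR a); last first.
          rewrite /a lnK; last by rewrite posrE divr_gt0 // pmulrn_lgt0.
          by field; rewrite ?gt_eqF.
        by rewrite ler_pM2l // ler_expR.
      lra.
  rewrite integral_cst; last exact: measurable_itv.
  apply: mule_gt0; first by rewrite lte_fin; lra.
  exact: normal_pos.
Qed.
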